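(* Let $p$ be a positive continuous even function on $(-1,1)$ such that no nontrivial solution $u$ of $u''+pu=0$ has more than one zero in $(-1,1)$, and let $F$ be the solution of $\mathcal{S}F=2p$ with $F(0)=0$, $F'(0)=1$, $F''(0)=0$. If $\varphi:(-1,1)\to\mathbb{R}^n$ is a $C^3$ curve with $\varphi'(x)\neq0$ and $S_1\varphi(x)\le 2p(x)$ for all $x\in(-1,1)$, then $$\frac{|\varphi(x_1)-\varphi(x_2)|}{\{|\varphi'(x_1)|\,|\varphi'(x_2)|\}^{1/2}}\ \ge\ \frac{|F(x_1)-F(x_2)|}{\{F'(x_1)F'(x_2)\}^{1/2}}\qquad\text{for all } x_1,x_2\in(-1,1).$$
   Context: For a real function $g$ with $g'\neq0$, $\mathcal{S}g=(g''/g')'-\tfrac12(g''/g')^2$. Equivalently $F(x)=\int_0^x u_0(t)^{-2}dt$ where $u_0$ solves $u''+pu=0$, $u_0(0)=1$, $u_0'(0)=0$ (and $u_0$ has no zeros in $(-1,1)$). For a $C^3$ curve $\varphi$ into $\mathbb{R}^n$ with $\varphi'\neq0$, the Ahlfors Schwarzian is $S_1\varphi=\frac{\langle\varphi',\varphi'''\rangle}{|\varphi'|^2}-3\frac{\langle\varphi',\varphi''\rangle^2}{|\varphi'|^4}+\frac32\frac{|\varphi''|^2}{|\varphi'|^2}$, with Euclidean inner product and norm. *)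

(* Defs.v *)
From Stdlib Require Import Reals Lra.
Open Scope R_scope.

(* Points of R^n are represented as functions nat -> R, only the
   coordinates 0..n-1 being relevant. *)
Fixpoint dotn (n : nat) (u v : nat -> R) : R :=
  match n with
  | O => 0
  | S k => dotn k u v + u k * v k
  end.

Definition normn (n : nat) (u : nat -> R) : R := sqrt (dotn n u u).

Definition vsub (u v : nat -> R) : nat -> R := fun i => u i - v i.

Definition in_I (x : R) : Prop := -1 < x < 1.

(* Schwarzian of a real function g from its derivatives g', g'', g''':
   (g''/g')' - 1/2 (g''/g')^2 = g'''/g' - 3/2 (g''/g')^2. *)
Definition schwarzian (g1 g2 g3 : R) : R :=
  g3 / g1 - 3 / 2 * (g2 / g1) ^ 2.

Definition ahlfors_S1 (n : nat) (d1 d2 d3 : nat -> R) : R :=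
  dotn n d1 d3 / (normn n d1) ^ 2
  - 3 * (dotn n d1 d2) ^ 2 / (normn n d1) ^ 4
  + 3 / 2 * (normn n d2) ^ 2 / (normn n d1) ^ 2.

(* Main.v *)
Require Import Defs.
From Stdlib Require Import Reals Lra Lia Psatz Ranalysis5.
Open Scope R_scope.

Lemma dl_plus f g x a b : derivable_pt_lim f x a -> derivable_pt_lim g x b ->
  derivable_pt_lim (fun t => f t + g t) x (a + b).
Proof. intros; now apply (derivable_pt_lim_plus f g). Qed.
Lemma dl_minus f g x a b : derivable_pt_lim f x a -> derivable_pt_lim g x b ->
  derivable_pt_lim (fun t => f t - g t) x (a - b).
Proof. intros; now apply (derivable_pt_lim_minus f g). Qed.
Lemma dl_mult f g x a b : derivable_pt_lim f x a -> derivable_pt_lim g x b ->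
  derivable_pt_lim (fun t => f t * g t) x (a * g x + f x * b).
Proof. intros; now apply (derivable_pt_lim_mult f g). Qed.
Lemma dl_div f g x a b : derivable_pt_lim f x a -> derivable_pt_lim g x b -> g x <> 0 ->
  derivable_pt_lim (fun t => f t / g t) x ((a * g x - b * f x) / (g x * g x)).
Proof. intros; now apply (derivable_pt_lim_div f g). Qed.
Lemma dl_const c x : derivable_pt_lim (fun _ => c) x 0.
Proof. apply (derivable_pt_lim_const c). Qed.
Lemma dl_sqrt f x a : derivable_pt_lim f x a -> 0 < f x ->
  derivable_pt_lim (fun t => sqrt (f t)) x (a / (2 * sqrt (f x))).
Proof. intros H H0.
  replace (a / (2 * sqrt (f x))) with (/ (2 * sqrt (f x)) * a) by (unfold Rdiv; ring).
  apply (derivable_pt_lim_comp f sqrt); auto. now apply derivable_pt_lim_sqrt. Qed.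
Lemma dl_eq f x a b : derivable_pt_lim f x a -> a = b -> derivable_pt_lim f x b.
Proof. intros; subst; auto. Qed.

Lemma dotn_comm n u v : dotn n u v = dotn n v u.
Proof. induction n; simpl; [ring| rewrite IHn; ring]. Qed.
Lemma dotn_nonneg n u : 0 <= dotn n u u.
Proof. induction n; simpl; [lra| nra]. Qed.
Lemma dotn_deriv n (U W : R -> nat -> R) U' W' x :
  (forall i, (i < n)%nat -> derivable_pt_lim (fun t => U t i) x (U' i)) ->
  (forall i, (i < n)%nat -> derivable_pt_lim (fun t => W t i) x (W' i)) ->
  derivable_pt_lim (fun t => dotn n (U t) (W t)) x (dotn n U' (W x) + dotn n (U x) W').
Proof.
  induction n; intros HU HW; simpl.
  - apply dl_eq with 0; [apply dl_const| ring].
  - eapply dl_eq. { apply dl_plus. { apply IHn; intros; [apply HU|apply HW]; lia. }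
    apply dl_mult; [apply HU|apply HW]; lia. } simpl. ring.
Qed.
Lemma dot3 n (r d1 d2 : nat -> R) l m k :
  dotn n (fun i => l * r i + m * d1 i + k * d2 i) (fun i => l * r i + m * d1 i + k * d2 i)
  = l*l*dotn n r r + m*m*dotn n d1 d1 + k*k*dotn n d2 d2 + 2*l*m*dotn n r d1
    + 2*l*k*dotn n r d2 + 2*m*k*dotn n d1 d2.
Proof. induction n; simpl; [ring| rewrite IHn; ring]. Qed.
Lemma normn_sq n u : normn n u * normn n u = dotn n u u.
Proof. unfold normn; apply sqrt_sqrt, dotn_nonneg. Qed.
Definition J1e Q A1 P al F1 F2 s :=
  (2 * A1 * F1 + Q * F2) / s - Q * F1 * al / (P * s).
Definition J2e Q A1 E P al be ga F1 F2 F3 s :=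
  (2 * (P + E) * F1 + 4 * A1 * F2 + Q * F3) / s
  - (2 * A1 * F1 + Q * F2) * al / (P * s)
  - (2 * A1 * F1 * al + Q * F2 * al + Q * F1 * (be + ga)) / (P * s)
  + 3 * Q * F1 * al * al / (P * P * s).
Definition Dpe J1 J2 F1 F2 w :=
  (J2 * (2 * w * F1) - (J1 / w * F1 + 2 * w * F2) * J1) / ((2 * w * F1) * (2 * w * F1)).
Definition Me Q A1 E P al be :=
  4*P*P*P*Q + 4*E*Q*P*P - 4*A1*A1*P*P + be*Q*Q*P - al*al*Q*Q - 4*A1*al*Q*P.

Lemma alg Q A1 E P al be ga F1 F2 F3 p s w :
  0 < s -> P = s * s -> 0 < w -> 0 < F1 -> Q = w * w * s / F1 ->
  F3 / F1 - 3 / 2 * (F2 / F1) ^ 2 = 2 * p ->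
  ga / P - 3 * al ^ 2 / P ^ 2 + 3 / 2 * be / P <= 2 * p ->
  0 <= Me Q A1 E P al be ->
  0 <= Dpe (J1e Q A1 P al F1 F2 s) (J2e Q A1 E P al be ga F1 F2 F3 s) F1 F2 w.
Proof.
  intros Hs HP Hw HF1 HQ HF HS HM.
  assert (HF3 : F3 = 2 * p * F1 + 3 * F2 * F2 / (2 * F1)).
  { apply Rmult_eq_reg_r with (/ F1). 2: apply Rinv_neq_0_compat; lra.
    rewrite <- HF. field. lra. }
  set (S1 := ga / P - 3 * al ^ 2 / P ^ 2 + 3 / 2 * be / P) in *.
  assert (Eq : Dpe (J1e Q A1 P al F1 F2 s) (J2e Q A1 E P al be ga F1 F2 F3 s) F1 F2 w
     = (F1 * F1 * F1 * (Me Q A1 E P al be / (P * P * P) + Q * Q / P * (4 * p - 2 * S1)))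
       / (w * ((2 * w * F1) * (2 * w * F1)))).
  { unfold S1, Dpe, J1e, J2e, Me. rewrite HF3, HQ, HP. field. lra. }
  rewrite Eq. apply Rmult_le_pos. 2: { left; apply Rinv_0_lt_compat.
    apply Rmult_lt_0_compat; auto. apply Rmult_lt_0_compat; apply Rmult_lt_0_compat; nra. }
  apply Rmult_le_pos. assert (0 < F1 * F1 * F1) by (repeat apply Rmult_lt_0_compat; auto). lra.
  assert (HP0 : 0 < P) by nra.
  apply Rplus_le_le_0_compat.
  apply Rmult_le_pos; auto. left; apply Rinv_0_lt_compat; repeat apply Rmult_lt_0_compat; auto.
  apply Rmult_le_pos. apply Rmult_le_pos. nra. left; apply Rinv_0_lt_compat; auto. lra.
Qed.

Lemma Me_nonneg n (r d1 d2 : nat -> R) :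
  0 < dotn n d1 d1 ->
  0 <= Me (dotn n r r) (dotn n r d1) (dotn n r d2) (dotn n d1 d1) (dotn n d1 d2) (dotn n d2 d2).
Proof.
  intros HP. set (P := dotn n d1 d1).
  pose proof (dotn_nonneg n (fun i => 2*P*P * r i + (-2*P*dotn n r d1 - dotn n r r * dotn n d1 d2) * d1 i
     + (dotn n r r * P) * d2 i)) as H.
  assert (E : Me (dotn n r r) (dotn n r d1) (dotn n r d2) P (dotn n d1 d2) (dotn n d2 d2) * P =
    dotn n (fun i => 2*P*P * r i + (-2*P*dotn n r d1 - dotn n r r * dotn n d1 d2) * d1 i
     + (dotn n r r * P) * d2 i) (fun i => 2*P*P * r i + (-2*P*dotn n r d1 - dotn n r r * dotn n d1 d2) * d1 i
     + (dotn n r r * P) * d2 i)).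
  { rewrite dot3. unfold Me, P. ring. }
  rewrite <- E in H. apply (Rmult_le_reg_r P); [exact HP| lra].
Qed.

Definition Qf n (phi : R -> nat -> R) a t := dotn n (vsub (phi t) (phi a)) (vsub (phi t) (phi a)).
Definition A1f n (phi phi1 : R -> nat -> R) a t := dotn n (vsub (phi t) (phi a)) (phi1 t).
Definition Ef n (phi phi2 : R -> nat -> R) a t := dotn n (vsub (phi t) (phi a)) (phi2 t).
Definition Pf n (phi1 : R -> nat -> R) t := dotn n (phi1 t) (phi1 t).
Definition alf n (phi1 phi2 : R -> nat -> R) t := dotn n (phi1 t) (phi2 t).
Definition bef n (phi2 : R -> nat -> R) t := dotn n (phi2 t) (phi2 t).
Definition gaf n (phi1 phi3 : R -> nat -> R) t := dotn n (phi1 t) (phi3 t).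


Lemma derivs n (phi phi1 phi2 phi3 : R -> nat -> R) a x :
  (forall i, (i < n)%nat -> derivable_pt_lim (fun t => phi t i) x (phi1 x i)) ->
  (forall i, (i < n)%nat -> derivable_pt_lim (fun t => phi1 t i) x (phi2 x i)) ->
  (forall i, (i < n)%nat -> derivable_pt_lim (fun t => phi2 t i) x (phi3 x i)) ->
  derivable_pt_lim (Qf n phi a) x (2 * A1f n phi phi1 a x) /\
  derivable_pt_lim (A1f n phi phi1 a) x (Pf n phi1 x + Ef n phi phi2 a x) /\
  derivable_pt_lim (Pf n phi1) x (2 * alf n phi1 phi2 x) /\
  derivable_pt_lim (alf n phi1 phi2) x (bef n phi2 x + gaf n phi1 phi3 x).
Proof.
  intros H1 H2 H3.
  assert (Hr : forall i, (i < n)%nat -> derivable_pt_lim (fun t => vsub (phi t) (phi a) i) x (phi1 x i)).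
  { intros i Hi. unfold vsub. apply dl_eq with (phi1 x i - 0).
    apply dl_minus. apply H1; auto. apply dl_const. ring. }
  repeat split.
  - eapply dl_eq. apply (dotn_deriv n (fun t => vsub (phi t) (phi a)) (fun t => vsub (phi t) (phi a))); eauto.
    unfold A1f. rewrite (dotn_comm n (phi1 x)). ring.
  - eapply dl_eq. apply (dotn_deriv n (fun t => vsub (phi t) (phi a)) phi1); eauto.
    unfold Pf, Ef. ring.
  - eapply dl_eq. apply (dotn_deriv n phi1 phi1); eauto.
    unfold alf. rewrite (dotn_comm n (phi2 x)). ring.
  - eapply dl_eq. apply (dotn_deriv n phi1 phi2); eauto.
    unfold bef, gaf. ring.
Qed.

Lemma derivsJ (Q A1 E P al be ga F1 F2 F3 : R -> R) x :
  derivable_pt_lim Q x (2 * A1 x) -> derivable_pt_lim A1 x (P x + E x) ->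
  derivable_pt_lim P x (2 * al x) -> derivable_pt_lim al x (be x + ga x) ->
  derivable_pt_lim F1 x (F2 x) -> derivable_pt_lim F2 x (F3 x) -> 0 < P x ->
  derivable_pt_lim (fun t => Q t * F1 t / sqrt (P t)) x
     (J1e (Q x) (A1 x) (P x) (al x) (F1 x) (F2 x) (sqrt (P x))) /\
  derivable_pt_lim (fun t => J1e (Q t) (A1 t) (P t) (al t) (F1 t) (F2 t) (sqrt (P t))) x
     (J2e (Q x) (A1 x) (E x) (P x) (al x) (be x) (ga x) (F1 x) (F2 x) (F3 x) (sqrt (P x))).
Proof.
  intros dQ dA dP dal dF1 dF2 HP.
  assert (ds := dl_sqrt P x _ dP HP).
  assert (Hs : 0 < sqrt (P x)) by (apply sqrt_lt_R0; auto).
  assert (HPs : P x = sqrt (P x) * sqrt (P x)) by (rewrite sqrt_sqrt; lra).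
  split.
  - eapply dl_eq. apply dl_div. apply dl_mult; eauto. exact ds. lra.
    unfold J1e. set (s := sqrt (P x)) in *. rewrite HPs. field. lra.
  - unfold J1e. eapply dl_eq.
    apply dl_minus. apply dl_div. apply dl_plus. apply dl_mult. apply dl_mult. apply dl_const. eauto. eauto.
    apply dl_mult; eauto. exact ds. lra.
    apply dl_div. apply dl_mult. apply dl_mult; eauto. eauto. apply dl_mult. eauto. exact ds.
    apply Rgt_not_eq. apply Rmult_lt_0_compat; lra.
    unfold J2e. set (s := sqrt (P x)) in *. rewrite HPs. field. lra.
Qed.

Lemma derivsD (J J1 F1 F2 : R -> R) J2 x :
  derivable_pt_lim J x (J1 x) -> derivable_pt_lim J1 x J2 -> derivable_pt_lim F1 x (F2 x) ->
  0 < J x -> 0 < F1 x ->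
  derivable_pt_lim (fun t => sqrt (J t)) x (J1 x / (2 * sqrt (J x) * F1 x) * F1 x) /\
  derivable_pt_lim (fun t => J1 t / (2 * sqrt (J t) * F1 t)) x (Dpe (J1 x) J2 (F1 x) (F2 x) (sqrt (J x))).
Proof.
  intros dJ dJ1 dF1 HJ HF1.
  assert (ds := dl_sqrt J x _ dJ HJ).
  assert (Hs : 0 < sqrt (J x)) by (apply sqrt_lt_R0; auto).
  split.
  - eapply dl_eq. exact ds. field. lra.
  - eapply dl_eq. apply dl_div. eauto. apply dl_mult. apply dl_mult. apply dl_const. exact ds. eauto.
    apply Rgt_not_eq. apply Rmult_lt_0_compat; lra.
    unfold Dpe. set (s := sqrt (J x)) in *. field. lra.
Qed.
Definition L0 f l := limit1_in f (fun h => 0 < h) l 0.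

Lemma L0_cont f a : continuity_pt f a -> L0 (fun h => f (a+h)) (f a).
Proof.
  intros H eps He. destruct (H eps He) as [alp [Ha Hb]].
  exists alp; split; auto. intros x [Hx Hd]. simpl in *. unfold Rdist in *.
  destruct (Req_dec x 0) as [->|Hx0]. lra.
  apply Hb. split. split. constructor. lra. simpl; unfold Rdist.
  replace (a + x - a) with (x - 0) by ring. auto.
Qed.

Lemma L0_deriv f a l : derivable_pt_lim f a l -> L0 (fun h => (f (a+h) - f a)/h) l.
Proof.
  intros H eps He. destruct (H eps He) as [d Hd].
  exists d; split. apply cond_pos. intros x [Hx Hdx]. simpl in *. unfold Rdist in *.
  apply Hd. lra. replace x with (x - 0) by ring. auto.
Qed.

Lemma L0_ext f g l : (forall h, 0 < h -> f h = g h) -> L0 f l -> L0 g l.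
Proof.
  intros E H eps He. destruct (H eps He) as [d [Hd H1]]. exists d; split; auto.
  intros x [Hx Hdx]. rewrite <- E by auto. apply H1; auto.
Qed.

Lemma L0_le f g A B : L0 f A -> L0 g B ->
  (exists d, 0 < d /\ forall h, 0 < h < d -> f h <= g h) -> A <= B.
Proof.
  intros Hf Hg [d [Hd H]]. destruct (Rle_dec A B) as [|Hn]; auto. exfalso.
  assert (He : 0 < (A - B)/2) by lra.
  destruct (Hf _ He) as [d1 [Hd1 H1]]. destruct (Hg _ He) as [d2 [Hd2 H2]].
  set (h := Rmin d (Rmin d1 d2) / 2).
  assert (Hm : 0 < Rmin d (Rmin d1 d2)) by (repeat apply Rmin_pos; auto).
  assert (h1 : 0 < h) by (unfold h; lra).
  assert (h2 : h < d) by (unfold h; pose proof (Rmin_l d (Rmin d1 d2)); lra).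
  assert (h3 : h < d1) by (unfold h; pose proof (Rmin_r d (Rmin d1 d2)); pose proof (Rmin_l d1 d2); lra).
  assert (h4 : h < d2) by (unfold h; pose proof (Rmin_r d (Rmin d1 d2)); pose proof (Rmin_r d1 d2); lra).
  specialize (H1 h). specialize (H2 h). specialize (H h).
  simpl in H1, H2. unfold Rdist in *.
  assert (A1 : Rabs (f h - A) < (A - B)/2) by (apply H1; split; auto; rewrite Rminus_0_r, Rabs_pos_eq; lra).
  assert (A2 : Rabs (g h - B) < (A - B)/2) by (apply H2; split; auto; rewrite Rminus_0_r, Rabs_pos_eq; lra).
  assert (f h <= g h) by (apply H; lra).
  apply Rabs_def2 in A1. apply Rabs_def2 in A2. lra.
Qed.

Lemma L0_pos f A : L0 f A -> 0 < A -> exists d, 0 < d /\ forall h, 0 < h < d -> 0 < f h.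
Proof.
  intros Hf HA. destruct (Hf A HA) as [d [Hd H]]. exists d; split; auto.
  intros h Hh. specialize (H h). simpl in H. unfold Rdist in H.
  assert (Rabs (f h - A) < A) by (apply H; split; [lra| rewrite Rminus_0_r, Rabs_pos_eq; lra]).
  apply Rabs_def2 in H0. lra.
Qed.

Lemma L0_plus f g A B : L0 f A -> L0 g B -> L0 (fun h => f h + g h) (A + B).
Proof. apply limit_plus. Qed.
Lemma L0_mult f g A B : L0 f A -> L0 g B -> L0 (fun h => f h * g h) (A * B).
Proof. apply limit_mul. Qed.
Lemma L0_inv f A : L0 f A -> A <> 0 -> L0 (fun h => / f h) (/ A).
Proof. apply limit_inv. Qed.
Lemma L0_const c : L0 (fun _ => c) c.
Proof. apply (limit_free (fun _ => c) _ 0 0). Qed.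

Lemma L0_dotn n (U W : R -> nat -> R) u w :
  (forall i, (i < n)%nat -> L0 (fun h => U h i) (u i)) ->
  (forall i, (i < n)%nat -> L0 (fun h => W h i) (w i)) ->
  L0 (fun h => dotn n (U h) (W h)) (dotn n u w).
Proof.
  induction n; intros HU HW; simpl.
  - apply L0_const.
  - apply L0_plus. apply IHn; intros; [apply HU|apply HW]; lia.
    apply L0_mult; [apply HU|apply HW]; lia.
Qed.
Lemma cmvt f g f' g' a b : a < b ->
  (forall c, a < c < b -> derivable_pt_lim f c (f' c)) ->
  (forall c, a < c < b -> derivable_pt_lim g c (g' c)) ->
  (forall c, a <= c <= b -> continuity_pt f c) ->
  (forall c, a <= c <= b -> continuity_pt g c) ->
  exists c, a < c < b /\ (g b - g a) * f' c = (f b - f a) * g' c.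
Proof.
  intros Hab Hf Hg Cf Cg.
  destruct (MVT f g a b (fun c P => exist _ (f' c) (Hf c P)) (fun c P => exist _ (g' c) (Hg c P)) Hab Cf Cg)
    as [c [P E]].
  exists c; split; auto.
Qed.

Lemma partA H D D' F F1 a b :
  a < b ->
  (forall x, a <= x <= b -> derivable_pt_lim F x (F1 x)) ->
  (forall x, a <= x <= b -> 0 < F1 x) ->
  (forall x, a <= x <= b -> continuity_pt H x) ->
  H a = 0 ->
  (forall x, a < x < b -> derivable_pt_lim H x (D x * F1 x)) ->
  (forall x, a < x < b -> derivable_pt_lim D x (D' x)) ->
  (forall x, a < x < b -> 0 <= D' x) ->
  forall u, a < u < b -> H u * (F b - F a) <= H b * (F u - F a).
Proof.
  intros Hab HF HF1 CH Ha HH HD HD' u Hu.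
  assert (CF : forall x, a <= x <= b -> continuity_pt F x).
  { intros x Hx. apply derivable_continuous_pt. exists (F1 x). apply HF; auto. }
  assert (Finc : forall x y, a <= x -> x < y -> y <= b -> F x < F y).
  { intros x y Hx Hxy Hy. destruct (MVT_cor2 F F1 x y Hxy) as [c [E Hc]].
    { intros; apply HF; lra. }
    assert (0 < F1 c) by (apply HF1; lra). nra. }
  destruct (cmvt H F (fun x => D x * F1 x) F1 a u) as [x1 [Hx1 E1]]; try lra.
  intros; apply HH; lra. intros; apply HF; lra. intros; apply CH; lra. intros; apply CF; lra.
  destruct (cmvt H F (fun x => D x * F1 x) F1 u b) as [x2 [Hx2 E2]]; try lra.
  intros; apply HH; lra. intros; apply HF; lra. intros; apply CH; lra. intros; apply CF; lra.
  assert (Hx1x2 : x1 < x2) by lra.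
  destruct (MVT_cor2 D D' x1 x2 Hx1x2) as [c [E3 Hc]]. { intros; apply HD; lra. }
  assert (0 <= D' c) by (apply HD'; lra).
  assert (P1 : 0 < F1 x1) by (apply HF1; lra).
  assert (P2 : 0 < F1 x2) by (apply HF1; lra).
  assert (Hu1 : H u = D x1 * (F u - F a)).
  { rewrite Ha in E1. apply Rmult_eq_reg_r with (F1 x1); [|lra]. nra. }
  assert (Hu2 : H b - H u = D x2 * (F b - F u)).
  { apply Rmult_eq_reg_r with (F1 x2); [|lra]. nra. }
  assert (G1 : F a < F u) by (apply Finc; lra).
  assert (G2 : F u < F b) by (apply Finc; lra).
  assert (D x1 <= D x2) by nra.
  assert (H b >= D x1 * (F b - F a)) by nra.
  rewrite Hu1. nra.
Qed.

Lemma dcont f x l : derivable_pt_lim f x l -> continuity_pt f x.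
Proof. intros H. apply derivable_continuous_pt. exists l. exact H. Qed.

Lemma dotn_scale n (u : nat -> R) h : h <> 0 ->
  dotn n (fun i => u i / h) (fun i => u i / h) = dotn n u u / (h * h).
Proof. intros Hh. induction n; simpl. field; auto. rewrite IHn. field; auto. Qed.

Lemma dotn_vsub_self n u : dotn n (vsub u u) (vsub u u) = 0.
Proof. induction n; simpl; auto. rewrite IHn. unfold vsub. ring. Qed.

Lemma dotn_vsub_sym n u v : dotn n (vsub u v) (vsub u v) = dotn n (vsub v u) (vsub v u).
Proof. induction n; simpl; auto. rewrite IHn. unfold vsub. ring. Qed.

Lemma key n (phi phi1 phi2 phi3 : R -> nat -> R) (F F1 F2 F3 p : R -> R) a b
  (hF1 : forall x, in_I x -> derivable_pt_lim F x (F1 x))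
  (hF2 : forall x, in_I x -> derivable_pt_lim F1 x (F2 x))
  (hF3 : forall x, in_I x -> derivable_pt_lim F2 x (F3 x))
  (hF1pos : forall x, in_I x -> 0 < F1 x)
  (hFS : forall x, in_I x -> schwarzian (F1 x) (F2 x) (F3 x) = 2 * p x)
  (hphi1 : forall i x, (i < n)%nat -> in_I x ->
      derivable_pt_lim (fun t => phi t i) x (phi1 x i))
  (hphi2 : forall i x, (i < n)%nat -> in_I x ->
      derivable_pt_lim (fun t => phi1 t i) x (phi2 x i))
  (hphi3 : forall i x, (i < n)%nat -> in_I x ->
      derivable_pt_lim (fun t => phi2 t i) x (phi3 x i))
  (hPpos : forall x, in_I x -> 0 < Pf n phi1 x)
  (hS : forall x, in_I x -> gaf n phi1 phi3 x / Pf n phi1 x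
      - 3 * alf n phi1 phi2 x ^ 2 / Pf n phi1 x ^ 2 + 3 / 2 * bef n phi2 x / Pf n phi1 x <= 2 * p x) :
  in_I a -> in_I b -> a < b -> (forall s, a < s < b -> 0 < Qf n phi a s) ->
  sqrt (Pf n phi1 a) * (F b - F a) ^ 2 <= Qf n phi a b * F1 b / sqrt (Pf n phi1 b) * F1 a.
Proof.
  intros Ia Ib Hab HQ.
  pose (Q := Qf n phi a). pose (A1 := A1f n phi phi1 a). pose (E := Ef n phi phi2 a).
  pose (P := Pf n phi1). pose (al := alf n phi1 phi2). pose (be := bef n phi2).
  pose (ga := gaf n phi1 phi3).
  pose (J := fun t => Q t * F1 t / sqrt (P t)).
  pose (J1 := fun t => J1e (Q t) (A1 t) (P t) (al t) (F1 t) (F2 t) (sqrt (P t))).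
  pose (J2 := fun t => J2e (Q t) (A1 t) (E t) (P t) (al t) (be t) (ga t) (F1 t) (F2 t) (F3 t) (sqrt (P t))).
  pose (H := fun t => sqrt (J t)).
  pose (D := fun t => J1 t / (2 * sqrt (J t) * F1 t)).
  pose (D' := fun t => Dpe (J1 t) (J2 t) (F1 t) (F2 t) (sqrt (J t))).
  assert (inI : forall x, a <= x <= b -> in_I x) by (intros x Hx; unfold in_I in *; lra).
  assert (DV : forall x, in_I x ->
    derivable_pt_lim Q x (2 * A1 x) /\ derivable_pt_lim A1 x (P x + E x) /\
    derivable_pt_lim P x (2 * al x) /\ derivable_pt_lim al x (be x + ga x)).
  { intros x Ix. apply derivs; intros; [apply hphi1|apply hphi2|apply hphi3]; auto. }
  assert (DJ : forall x, in_I x -> derivable_pt_lim J x (J1 x) /\ derivable_pt_lim J1 x (J2 x)).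
  { intros x Ix. destruct (DV x Ix) as [d1 [d2 [d3 d4]]].
    apply derivsJ; auto. }
  assert (Jnn : forall x, in_I x -> 0 <= J x).
  { intros x Ix. unfold J. apply Rmult_le_pos. apply Rmult_le_pos. apply dotn_nonneg.
    left; auto. left; apply Rinv_0_lt_compat, sqrt_lt_R0, hPpos; auto. }
  assert (QA : Q a = 0) by (unfold Q, Qf; apply dotn_vsub_self).
  assert (Finc : forall x y, a <= x -> x < y -> y <= b -> F x < F y).
  { intros x y Hx Hxy Hy. destruct (MVT_cor2 F F1 x y Hxy) as [c [Ec Hc]].
    { intros; apply hF1, inI; lra. }
    assert (0 < F1 c) by (apply hF1pos, inI; lra). nra. }
  assert (PA : forall u, a < u < b -> H u * (F b - F a) <= H b * (F u - F a)).
  { apply (partA H D D' F F1 a b Hab).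
    - intros; apply hF1, inI; auto.
    - intros; apply hF1pos, inI; auto.
    - intros x Hx. unfold H. apply (continuity_pt_comp J sqrt).
      apply (dcont _ _ (J1 x)). apply DJ, inI; auto.
      apply continuity_pt_sqrt. apply Jnn, inI; auto.
    - unfold H, J. rewrite QA. unfold Rdiv. rewrite !Rmult_0_l. apply sqrt_0.
    - intros x Hx. assert (Ix : in_I x) by (apply inI; lra).
      assert (0 < J x). { unfold J. apply Rmult_lt_0_compat. apply Rmult_lt_0_compat.
        apply HQ; auto. apply hF1pos; auto. apply Rinv_0_lt_compat, sqrt_lt_R0, hPpos; auto. }
      destruct (DJ x Ix). eapply proj1, (derivsD J J1 F1 F2 (J2 x) x); auto.
    - intros x Hx. assert (Ix : in_I x) by (apply inI; lra).
      assert (0 < J x). { unfold J. apply Rmult_lt_0_compat. apply Rmult_lt_0_compat.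
        apply HQ; auto. apply hF1pos; auto. apply Rinv_0_lt_compat, sqrt_lt_R0, hPpos; auto. }
      destruct (DJ x Ix). eapply proj2, (derivsD J J1 F1 F2 (J2 x) x); auto.
    - intros x Hx. assert (Ix : in_I x) by (apply inI; lra).
      assert (HJ : 0 < J x). { unfold J. apply Rmult_lt_0_compat. apply Rmult_lt_0_compat.
        apply HQ; auto. apply hF1pos; auto. apply Rinv_0_lt_compat, sqrt_lt_R0, hPpos; auto. }
      assert (HP : 0 < P x) by (apply hPpos; auto).
      assert (HF : 0 < F1 x) by (apply hF1pos; auto).
      unfold D', J2, J1. apply alg with (p := p x).
      + apply sqrt_lt_R0; auto.
      + rewrite sqrt_sqrt; lra.
      + apply sqrt_lt_R0; auto.
      + auto.
      + rewrite sqrt_sqrt by lra. unfold J. field. split. apply Rgt_not_eq, sqrt_lt_R0; auto. lra.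
      + pose proof (hFS x Ix) as HS. unfold schwarzian in HS. exact HS.
      + apply hS; auto.
      + apply Me_nonneg. apply hPpos; auto. }
  assert (SQ : forall h, 0 < h < b - a ->
     J (a + h) / (h * h) * (F b - F a) ^ 2 <= J b * ((F (a+h) - F a) / h * ((F (a+h) - F a) / h))).
  { intros h Hh. assert (Hu : a < a + h < b) by lra.
    specialize (PA _ Hu).
    assert (G1 : F a < F (a+h)) by (apply Finc; lra).
    assert (G2 : F a < F b) by (apply Finc; lra).
    assert (H0u : 0 <= H (a+h)) by apply sqrt_pos.
    assert (H0b : 0 <= H b) by apply sqrt_pos.
    assert (Hsq : (H (a+h) * (F b - F a)) * (H (a+h) * (F b - F a)) <= (H b * (F (a+h) - F a)) * (H b * (F (a+h) - F a))).
    { apply Rmult_le_compat; auto; apply Rmult_le_pos; lra. }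
    assert (E1 : H (a+h) * H (a+h) = J (a+h)) by (apply sqrt_sqrt, Jnn, inI; lra).
    assert (E2 : H b * H b = J b) by (apply sqrt_sqrt, Jnn, inI; lra).
    assert (Hh2 : 0 < h * h) by nra.
    apply (Rmult_le_reg_r (h*h)); auto.
    replace (J (a + h) / (h * h) * (F b - F a) ^ 2 * (h * h)) with
      ((H (a+h) * (F b - F a)) * (H (a+h) * (F b - F a))) by (rewrite <- E1; field; lra).
    replace (J b * ((F (a + h) - F a) / h * ((F (a + h) - F a) / h)) * (h * h)) with
      ((H b * (F (a+h) - F a)) * (H b * (F (a+h) - F a))) by (rewrite <- E2; field; lra).
    auto. }
  assert (LQ : L0 (fun h => Q (a + h) / (h * h)) (P a)).
  { apply L0_ext with (fun h => dotn n (fun i => (phi (a+h) i - phi a i) / h) (fun i => (phi (a+h) i - phi a i) / h)).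
    { intros h Hh. rewrite dotn_scale by lra. reflexivity. }
    unfold P, Pf. apply L0_dotn; intros i Hi; apply (L0_deriv (fun t => phi t i)); apply hphi1; auto. }
  assert (LF1 : L0 (fun h => F1 (a + h)) (F1 a)).
  { apply L0_cont. apply (dcont _ _ (F2 a)). apply hF2; auto. }
  assert (LS : L0 (fun h => / sqrt (P (a + h))) (/ sqrt (P a))).
  { apply L0_inv. apply (L0_cont (fun t => sqrt (P t))).
    destruct (DV a Ia) as [_ [_ [dP _]]].
    apply (dcont _ _ _ (dl_sqrt P a _ dP (hPpos a Ia))).
    apply Rgt_not_eq, sqrt_lt_R0, hPpos; auto. }
  assert (LFq : L0 (fun h => (F (a+h) - F a) / h) (F1 a)) by (apply L0_deriv, hF1; auto).
  assert (LE : P a * F1 a * / sqrt (P a) * (F b - F a) ^ 2 <= J b * (F1 a * F1 a)).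
  { apply (L0_le (fun h => J (a + h) / (h * h) * (F b - F a) ^ 2)
                 (fun h => J b * ((F (a+h) - F a) / h * ((F (a+h) - F a) / h)))).
    - apply L0_ext with (fun h => Q (a + h) / (h * h) * F1 (a + h) * / sqrt (P (a + h)) * (F b - F a) ^ 2).
      { intros h Hh. unfold J, Rdiv. ring. }
      apply L0_mult; [|apply L0_const]. apply L0_mult; auto. apply L0_mult; auto.
    - apply L0_mult. apply L0_const. apply L0_mult; auto.
    - exists (b - a). split. lra. auto. }
  assert (HPa : 0 < P a) by (apply hPpos; auto).
  assert (HF1a : 0 < F1 a) by (apply hF1pos; auto).
  assert (Esq : P a * / sqrt (P a) = sqrt (P a)).
  { pattern (P a) at 1. rewrite <- (sqrt_sqrt (P a)) by lra. field. apply Rgt_not_eq, sqrt_lt_R0; auto. }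
  assert (LE' : sqrt (P a) * (F b - F a) ^ 2 * F1 a <= J b * (F1 a * F1 a)).
  { rewrite <- Esq. replace (P a * / sqrt (P a) * (F b - F a) ^ 2 * F1 a) with
      (P a * F1 a * / sqrt (P a) * (F b - F a) ^ 2) by ring. exact LE. }
  apply (Rmult_le_reg_r (F1 a)); auto.
  replace (Qf n phi a b * F1 b / sqrt (Pf n phi1 b) * F1 a * F1 a) with (J b * (F1 a * F1 a))
    by (unfold J, Q, P; ring).
  exact LE'.
Qed.

Lemma cont_pos f x : continuity_pt f x -> 0 < f x -> exists d, 0 < d /\ forall y, Rabs (y - x) < d -> 0 < f y.
Proof.
  intros H Hx. destruct (H (f x) Hx) as [d [Hd Hy]]. exists d; split; auto.
  intros y Hyx. destruct (Req_dec x y) as [<-|Hne]; auto.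
  assert (Rdist (f y) (f x) < f x). { apply Hy. split. split. constructor. auto. exact Hyx. }
  unfold Rdist in H0. apply Rabs_def2 in H0. lra.
Qed.

Lemma main_ab n (phi phi1 phi2 phi3 : R -> nat -> R) (F F1 F2 F3 p : R -> R) a b
  (hF1 : forall x, in_I x -> derivable_pt_lim F x (F1 x))
  (hF2 : forall x, in_I x -> derivable_pt_lim F1 x (F2 x))
  (hF3 : forall x, in_I x -> derivable_pt_lim F2 x (F3 x))
  (hF1pos : forall x, in_I x -> 0 < F1 x)
  (hFS : forall x, in_I x -> schwarzian (F1 x) (F2 x) (F3 x) = 2 * p x)
  (hphi1 : forall i x, (i < n)%nat -> in_I x ->
      derivable_pt_lim (fun t => phi t i) x (phi1 x i))
  (hphi2 : forall i x, (i < n)%nat -> in_I x ->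
      derivable_pt_lim (fun t => phi1 t i) x (phi2 x i))
  (hphi3 : forall i x, (i < n)%nat -> in_I x ->
      derivable_pt_lim (fun t => phi2 t i) x (phi3 x i))
  (hPpos : forall x, in_I x -> 0 < Pf n phi1 x)
  (hS : forall x, in_I x -> gaf n phi1 phi3 x / Pf n phi1 x
      - 3 * alf n phi1 phi2 x ^ 2 / Pf n phi1 x ^ 2 + 3 / 2 * bef n phi2 x / Pf n phi1 x <= 2 * p x) :
  in_I a -> in_I b -> a < b ->
  sqrt (Pf n phi1 a) * (F b - F a) ^ 2 <= Qf n phi a b * F1 b / sqrt (Pf n phi1 b) * F1 a.
Proof.
  intros Ia Ib Hab.
  pose (Q := Qf n phi a).
  assert (inI : forall x, a <= x <= b -> in_I x) by (intros x Hx; unfold in_I in *; lra).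
  assert (KEY : forall b', in_I b' -> a < b' -> (forall s, a < s < b' -> 0 < Qf n phi a s) ->
    sqrt (Pf n phi1 a) * (F b' - F a) ^ 2 <= Qf n phi a b' * F1 b' / sqrt (Pf n phi1 b') * F1 a).
  { intros b' Ib' Hab' HQ. eapply key; eauto. }
  assert (LQ : L0 (fun h => Q (a + h) / (h * h)) (Pf n phi1 a)).
  { apply L0_ext with (fun h => dotn n (fun i => (phi (a+h) i - phi a i) / h) (fun i => (phi (a+h) i - phi a i) / h)).
    { intros h Hh. rewrite dotn_scale by lra. reflexivity. }
    unfold Pf. apply L0_dotn; intros i Hi; apply (L0_deriv (fun t => phi t i)); apply hphi1; auto. }
  destruct (L0_pos _ _ LQ (hPpos a Ia)) as [d [Hd Hnear]].
  assert (Qnear : forall s, a < s < a + d -> 0 < Q s).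
  { intros s Hs. specialize (Hnear (s - a)). replace s with (a + (s - a)) by ring.
    assert (0 < Q (a + (s - a)) / ((s - a) * (s - a))) by (apply Hnear; lra).
    assert (0 < (s - a) * (s - a)) by nra.
    unfold Rdiv in H. apply Rmult_lt_reg_r with (/ ((s - a) * (s - a))).
    apply Rinv_0_lt_compat; auto. lra. }
  assert (Finc : forall x y, a <= x -> x < y -> y <= b -> F x < F y).
  { intros x y Hx Hxy Hy. destruct (MVT_cor2 F F1 x y Hxy) as [c [Ec Hc]].
    { intros; apply hF1, inI; lra. }
    assert (0 < F1 c) by (apply hF1pos, inI; lra). nra. }
  assert (Qpos : forall t, a < t <= b -> (forall s, a < s < t -> 0 < Q s) -> 0 < Q t).
  { intros t Ht Hs. assert (K := KEY t (inI t ltac:(lra)) (proj1 Ht) Hs).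
    assert (0 < sqrt (Pf n phi1 a)) by (apply sqrt_lt_R0, hPpos; auto).
    assert (F a < F t) by (apply Finc; lra).
    assert (0 < sqrt (Pf n phi1 a) * (F t - F a) ^ 2) by (apply Rmult_lt_0_compat; auto; apply pow_lt; lra).
    assert (0 <= Q t) by apply dotn_nonneg.
    destruct H2 as [|H2]; auto. exfalso. unfold Q in H2. rewrite <- H2 in K.
    unfold Rdiv in K. rewrite !Rmult_0_l in K. lra. }
  pose (E := fun t => a < t <= b /\ forall s, a < s < t -> 0 < Q s).
  assert (Eb : bound E) by (exists b; intros t [Ht _]; lra).
  pose (t0 := Rmin (a + d / 2) b).
  assert (Et0 : E t0).
  { unfold E, t0. split. split. apply Rmin_glb_lt; lra. apply Rmin_r.
    intros s Hs. apply Qnear. pose proof (Rmin_l (a + d/2) b). lra. }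
  destruct (completeness E Eb (ex_intro _ t0 Et0)) as [m [Hub Hlub]].
  assert (Hm1 : t0 <= m) by (apply Hub; auto).
  assert (Hm2 : m <= b) by (apply Hlub; intros t [Ht _]; lra).
  assert (Ht0 : a < t0) by (unfold t0; apply Rmin_glb_lt; lra).
  assert (Hall : forall s, a < s < m -> 0 < Q s).
  { intros s Hs. destruct (Rlt_dec 0 (Q s)) as [|Hn]; auto. exfalso.
    assert (m <= s). { apply Hlub. intros t [Ht Hts]. destruct (Rle_dec t s); auto.
      exfalso. apply Hn. apply Hts. lra. }
    lra. }
  assert (Hmb : m = b).
  { destruct Hm2 as [Hlt|]; auto. exfalso.
    assert (Qm : 0 < Q m) by (apply Qpos; auto; lra).
    assert (Im : in_I m) by (apply inI; lra).
    destruct (derivs n phi phi1 phi2 phi3 a m) as [dQ _].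
    { intros; apply hphi1; auto. } { intros; apply hphi2; auto. } { intros; apply hphi3; auto. }
    destruct (cont_pos Q m (dcont _ _ _ dQ) Qm) as [del [Hdel Hpos]].
    pose (t1 := Rmin (m + del / 2) b).
    assert (Et1 : E t1).
    { unfold E, t1. split. split. apply Rmin_glb_lt; lra. apply Rmin_r.
      intros s Hs. destruct (Rlt_le_dec s m). apply Hall; lra.
      apply Hpos. pose proof (Rmin_l (m + del/2) b). rewrite Rabs_pos_eq; lra. }
    assert (Ht1 : t1 <= m) by (apply Hub; auto).
    unfold t1 in Ht1. assert (m < Rmin (m + del / 2) b) by (apply Rmin_glb_lt; lra). lra. }
  subst m. apply KEY; auto.
Qed.

Lemma final_conv n (phi phi1 : R -> nat -> R) (F F1 : R -> R) a b :
  0 < Pf n phi1 a -> 0 < Pf n phi1 b -> 0 < F1 a -> 0 < F1 b ->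
  sqrt (Pf n phi1 a) * (F b - F a) ^ 2 <= Qf n phi a b * F1 b / sqrt (Pf n phi1 b) * F1 a ->
  normn n (vsub (phi a) (phi b)) / sqrt (normn n (phi1 a) * normn n (phi1 b))
    >= Rabs (F a - F b) / sqrt (F1 a * F1 b).
Proof.
  intros Pa Pb Fa Fb K.
  unfold normn. rewrite dotn_vsub_sym. fold (Qf n phi a b). fold (Pf n phi1 a) (Pf n phi1 b).
  set (sa := sqrt (Pf n phi1 a)) in *. set (sb := sqrt (Pf n phi1 b)) in *.
  assert (Hsa : 0 < sa) by (apply sqrt_lt_R0; auto).
  assert (Hsb : 0 < sb) by (apply sqrt_lt_R0; auto).
  rewrite <- sqrt_Rsqr_abs.
  rewrite <- !sqrt_div_alt by (apply Rmult_lt_0_compat; auto).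
  apply Rle_ge, sqrt_le_1_alt.
  set (Q := Qf n phi a b) in *.
  assert (K2 : sa * sb * (F b - F a) ^ 2 <= Q * F1 b * F1 a).
  { apply (Rmult_le_compat_r sb) in K; [|lra].
    replace (sa * sb * (F b - F a) ^ 2) with (sa * (F b - F a) ^ 2 * sb) by ring.
    replace (Q * F1 b * F1 a) with (Q * F1 b / sb * F1 a * sb) by (field; lra). exact K. }
  unfold Rsqr. apply (Rmult_le_reg_r ((F1 a * F1 b) * (sa * sb))).
  repeat apply Rmult_lt_0_compat; auto.
  replace ((F a - F b) * (F a - F b) / (F1 a * F1 b) * (F1 a * F1 b * (sa * sb)))
    with (sa * sb * (F b - F a) ^ 2) by (field; lra).
  replace (Q / (sa * sb) * (F1 a * F1 b * (sa * sb))) with (Q * F1 b * F1 a) by (field; lra).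
  exact K2.
Qed.

Theorem theorem2
  (p : R -> R)
  (hp_pos : forall x, in_I x -> 0 < p x)
  (hp_cont : forall x, in_I x -> continuity_pt p x)
  (hp_even : forall x, in_I x -> p (- x) = p x)
  (hp_disc : forall u u1 u2 : R -> R,
      (forall x, in_I x -> derivable_pt_lim u x (u1 x)) ->
      (forall x, in_I x -> derivable_pt_lim u1 x (u2 x)) ->
      (forall x, in_I x -> u2 x + p x * u x = 0) ->
      (exists x, in_I x /\ u x <> 0) ->
      forall a b, in_I a -> in_I b -> u a = 0 -> u b = 0 -> a = b)
  (F F1 F2 F3 : R -> R)
  (hF1 : forall x, in_I x -> derivable_pt_lim F x (F1 x))
  (hF2 : forall x, in_I x -> derivable_pt_lim F1 x (F2 x))
  (hF3 : forall x, in_I x -> derivable_pt_lim F2 x (F3 x))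
  (hF1nz : forall x, in_I x -> F1 x <> 0)
  (hFS : forall x, in_I x -> schwarzian (F1 x) (F2 x) (F3 x) = 2 * p x)
  (hF0 : F 0 = 0) (hF10 : F1 0 = 1) (hF20 : F2 0 = 0)
  (n : nat)
  (phi phi1 phi2 phi3 : R -> nat -> R)
  (hphi1 : forall i x, (i < n)%nat -> in_I x ->
      derivable_pt_lim (fun t => phi t i) x (phi1 x i))
  (hphi2 : forall i x, (i < n)%nat -> in_I x ->
      derivable_pt_lim (fun t => phi1 t i) x (phi2 x i))
  (hphi3 : forall i x, (i < n)%nat -> in_I x ->
      derivable_pt_lim (fun t => phi2 t i) x (phi3 x i))
  (hphi3c : forall i x, (i < n)%nat -> in_I x ->
      continuity_pt (fun t => phi3 t i) x)
  (hphi1nz : forall x, in_I x -> normn n (phi1 x) <> 0)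
  (hS1 : forall x, in_I x ->
      ahlfors_S1 n (phi1 x) (phi2 x) (phi3 x) <= 2 * p x) :
  forall x1 x2, in_I x1 -> in_I x2 ->
    normn n (vsub (phi x1) (phi x2))
      / sqrt (normn n (phi1 x1) * normn n (phi1 x2))
    >= Rabs (F x1 - F x2) / sqrt (F1 x1 * F1 x2).
Proof.
  intros x1 x2 I1 I2.
  assert (I0 : in_I 0) by (unfold in_I; lra).
  assert (F1pos : forall x, in_I x -> 0 < F1 x).
  { intros x Ix. destruct (Rlt_le_dec 0 (F1 x)) as [|Hle]; auto. exfalso.
    assert (Hneg : F1 x < 0) by (destruct Hle; auto; exfalso; apply (hF1nz x); auto).
    assert (C : forall y, in_I y -> continuity_pt F1 y) by (intros; apply (dcont _ _ (F2 y)); auto).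
    destruct (Rlt_le_dec x 0) as [Hx|Hx].
    - destruct (IVT_interv F1 x 0) as [z [Hz Ez]]; auto.
      intros y Hy; apply C; unfold in_I in *; lra. lra.
      apply (hF1nz z); auto. unfold in_I in *; lra.
    - destruct Hx as [Hx|Hx]; [|subst x; lra].
      destruct (IVT_interv (fun t => - F1 t) 0 x) as [z [Hz Ez]]; auto.
      intros y Hy; apply continuity_pt_opp; apply C; unfold in_I in *; lra. lra. lra.
      apply (hF1nz z). unfold in_I in *; lra. lra. }
  assert (Ppos : forall x, in_I x -> 0 < Pf n phi1 x).
  { intros x Ix. pose proof (dotn_nonneg n (phi1 x)). destruct H as [|H]; auto.
    exfalso. apply (hphi1nz x Ix). unfold normn. rewrite <- H. apply sqrt_0. }
  assert (Hpow2 : forall u, normn n u ^ 2 = dotn n u u).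
  { intros u. simpl. rewrite Rmult_1_r. apply normn_sq. }
  assert (hS : forall x, in_I x -> gaf n phi1 phi3 x / Pf n phi1 x
      - 3 * alf n phi1 phi2 x ^ 2 / Pf n phi1 x ^ 2 + 3 / 2 * bef n phi2 x / Pf n phi1 x <= 2 * p x).
  { intros x Ix. pose proof (hS1 x Ix) as H. unfold ahlfors_S1 in H.
    replace (normn n (phi1 x) ^ 4) with ((normn n (phi1 x) ^ 2) ^ 2) in H by ring.
    rewrite !Hpow2 in H. exact H. }
  assert (MAIN : forall a b, in_I a -> in_I b -> a < b ->
    normn n (vsub (phi a) (phi b)) / sqrt (normn n (phi1 a) * normn n (phi1 b))
    >= Rabs (F a - F b) / sqrt (F1 a * F1 b)).
  { intros a b Ia Ib Hab. apply final_conv; auto.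
    eapply main_ab; eauto. }
  destruct (Rtotal_order x1 x2) as [H|[H|H]].
  - apply MAIN; auto.
  - subst x2. unfold Rminus. rewrite Rplus_opp_r, Rabs_R0. unfold Rdiv. rewrite Rmult_0_l.
    apply Rle_ge. apply Rmult_le_pos. apply sqrt_pos.
    destruct (Rle_lt_dec (sqrt (normn n (phi1 x1) * normn n (phi1 x1))) 0) as [Hs|Hs].
    + assert (Hz : sqrt (normn n (phi1 x1) * normn n (phi1 x1)) = 0) by (pose proof (sqrt_pos (normn n (phi1 x1) * normn n (phi1 x1))); lra).
      rewrite Hz, Rinv_0. lra.
    + left; apply Rinv_0_lt_compat; auto.
  - unfold normn. rewrite dotn_vsub_sym. fold (normn n (vsub (phi x2) (phi x1))).
    rewrite Rabs_minus_sym. rewrite (Rmult_comm (normn n (phi1 x1))), (Rmult_comm (F1 x1)).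
    apply MAIN; auto.
Qed.
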